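(* In the setting of the context, assume $u$ and $\hat u=u+v$ are quasidefinite, the functionals $(\beta^{(j)}_m)_x$ are linearly independent (in the sense of the context), and that at least one of $(\operatorname{Ker}^R_\beta)^{\perp^R_u}=\{0_p\}$ or $\mathbb I^{\perp^L_u}=\{0_p\}$ holds. Then for every $n\ge0$ the $Np\times Np$ matrix $M_n:=I_{Np}+\langle\mathcal J^{[0,1]}_{K_n}(x),(\beta)_x\rangle$ is nonsingular, and for every $n\ge1$ $$\hat P^{[1]}_n(x)=P^{[1]}_n(x)-\langle P^{[1]}_n(x),(\beta)_x\rangle\,M_{n-1}^{-1}\,\mathcal J^{[0,1]}_{K_{n-1}}(x),$$ $$(\hat P^{[2]}_n(y))^\top=(P^{[2]}_n(y))^\top-\langle K_{n-1}(x,y),(\beta)_x\rangle\,M_{n-1}^{-1}\,\big(\mathcal J_{P^{[2]}_n}\big)^\top,$$ $$\hat H_n=H_n+\langle P^{[1]}_n(x),(\beta)_x\rangle\,M_{n-1}^{-1}\,\big(\mathcal J_{P^{[2]}_n}\big)^\top .$$ Equivalently, with the quasideterminant $\Theta_*\begin{bmatrix}A&B\\C&D\end{bmatrix}=D-CA^{-1}B$: $\hat P^{[1]}_n(x)=\Theta_*\begin{bmatrix}M_{n-1}&\mathcal J^{[0,1]}_{K_{n-1}}(x)\\ \langle P^{[1]}_n(x),(\beta)_x\rangle&P^{[1]}_n(x)\end{bmatrix}$, $(\hat P^{[2]}_n(y))^\top=\Theta_*\begin{bmatrix}M_{n-1}&(\mathcal J_{P^{[2]}_n})^\top\\ \langle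 K_{n-1}(x,y),(\beta)_x\rangle&(P^{[2]}_n(y))^\top\end{bmatrix}$, $\hat H_n=\Theta_*\begin{bmatrix}M_{n-1}&-(\mathcal J_{P^{[2]}_n})^\top\\ \langle P^{[1]}_n(x),(\beta)_x\rangle&H_n\end{bmatrix}$.
   Context: Fix $p\ge1$; ${}^\top$ is transpose. A matrix of generalized kernels $w_{x,y}$ ($p\times p$ matrix of continuous linear functionals on $\mathbb C[x,y]$) defines $\langle P(x),Q(y)\rangle_w\in\mathbb C^{p\times p}$, $(\langle P,Q\rangle_w)_{i,j}=\sum_{k,l}\langle (w_{x,y})_{k,l},P_{i,k}(x)Q_{j,l}(y)\rangle$. It is quasidefinite if all leading block truncations of its Gram matrix $(\langle I_px^k,I_py^l\rangle_w)_{k,l\ge0}$ are nonsingular; then the unique factorization $G=S_1^{-1}HS_2^{-\top}$ ($S_i$ block lower unitriangular, $H=\operatorname{diag}(H_0,H_1,\dots)$) gives monic biorthogonal families $P^{[i]}_n(x)=\sum_{k\le n}(S_i)_{n,k}x^k$ with $\langle P^{[1]}_n,P^{[2]}_m\rangle_w=\delta_{n,m}H_n$, and Christoffel--Darboux kernels $K_n(x,y)=\sum_{k=0}^n(P^{[2]}_k(y))^\top H_k^{-1}P^{[1]}_k(x)$. Objects for $u$ are unhatted, for $\hat u=u+v$ hatted. When an argument depends on another variable (e.g. $K_{n-1}(x,y)$ in the first slot), the other variable is held fixed as a parameter. Uvarov data: distinct real $x_1,\dots,x_q$, positive integers $\kappa^{(j)}$, $N=\sum_j\kappa^{(j)}$;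 for each $j$ and $0\le m\le\kappa^{(j)}-1$ a $p\times p$ matrix $(\beta^{(j)}_m)_x$ of continuous linear functionals on $\mathbb C[x]$. For such $\beta_x$ and $P\in\mathbb C^{p\times p}[x]$: $(\langle P(x),\beta_x\rangle)_{i,l}=\sum_k\langle(\beta_x)_{k,l},P_{i,k}\rangle$ and $(\langle \beta_x,P(x)\rangle)_{k,j}=\sum_l\langle(\beta_x)_{k,l},P_{l,j}\rangle$. Linear independence means: if $X^{(j)}_m\in\mathbb C^{p\times p}$ satisfy $\sum_{j,m}(\beta^{(j)}_m)_xX^{(j)}_m=0$ (matrix product) then all $X^{(j)}_m=0_p$, and if $\sum_{j,m}Y^{(j)}_m(\beta^{(j)}_m)_x=0$ then all $Y^{(j)}_m=0_p$. The perturbation $v_{x,y}=\sum_{j}\sum_{m}\frac{(-1)^m}{m!}(\beta^{(j)}_m)_x\otimes\delta^{(m)}(y-x_j)$ has form $\langle P(x),Q(y)\rangle_v=\sum_{j=1}^q\sum_{m=0}^{\kappa^{(j)}-1}\frac1{m!}\langle P(x),(\beta^{(j)}_m)_x\rangle(Q^{(m)}(x_j))^\top$. Jets: $\mathcal J_f=\big[f(x_1),\tfrac{f'(x_1)}{1!},\dots,\tfrac{f^{(\kappa^{(1)}-1)}(x_1)}{(\kappa^{(1)}-1)!},\dots,f(x_q),\dots,\tfrac{f^{(\kappa^{(q)}-1)}(x_q)}{(\kappa^{(q)}-1)!}\big]\in\mathbb C^{p\times Np}$; $\mathcal J^{[0,1]}_K(x)\in\mathbb C^{Np\times p}$ is the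 block column with blocks, same order, $\frac1{m!}\partial_y^mK(x,y)|_{y=x_j}$. $\langle P(x),(\beta)_x\rangle\in\mathbb C^{p\times Np}$ is the block row $[\langle P,(\beta^{(1)}_0)_x\rangle,\dots,\langle P,(\beta^{(1)}_{\kappa^{(1)}-1})_x\rangle,\dots,\langle P,(\beta^{(q)}_{\kappa^{(q)}-1})_x\rangle]$; for a block column $F(x)$ of $N$ matrix polynomials $F_1,\dots,F_N$, $\langle F(x),(\beta)_x\rangle\in\mathbb C^{Np\times Np}$ has $r$-th block row $\langle F_r(x),(\beta)_x\rangle$. Subspaces: $\operatorname{Ker}^R_\beta=\{P\in\mathbb C^{p\times p}[x]:\langle(\beta^{(j)}_m)_x,P(x)\rangle=0_p\ \text{for all } j,m\}$; $\mathbb I=(x-x_1)^{\kappa^{(1)}}\cdots(x-x_q)^{\kappa^{(q)}}\mathbb C^{p\times p}[x]$. For a set $S$ of matrix polynomials, $S^{\perp^R_u}=\{Q:\langle P(x),Q(y)\rangle_u=0_p\ \forall P\in S\}$ and $S^{\perp^L_u}=\{Q:\langle Q(x),P(y)\rangle_u=0_p\ \forall P\in S\}$. *)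

(* Defs.v *)
From HB Require Import structures.
From mathcomp Require Import all_boot all_order all_algebra.
From mathcomp Require Import reals.
From mathcomp Require Import complex.

Set Implicit Arguments.
Unset Strict Implicit.
Unset Printing Implicit Defensive.

Import Order.TTheory GRing.Theory Num.Theory.
Local Open Scope ring_scope.

(* Bivariate polynomials: {poly {poly C}}, the OUTER variable is y and the  *)
(* coefficients are polynomials in the INNER variable x.                     *)

Section Uvarov.
Variable R : realType.
Local Notation C := (R[i]).
Variable p : nat.

(* A continuous linear functional on C[x] (every linear functional on C[x] *)
(* is continuous for the standard inductive-limit topology).               *)
Definition lin_functional (f : {poly C} -> C) : Prop :=
  forall (a : C) (g h : {poly C}), f (a *: g + h) = a * f g + f h.

Definition lin_functional2 (f : {poly {poly C}} -> C) : Prop :=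
  forall (a : C) (g h : {poly {poly C}}), f (a%:P%:P * g + h) = a * f g + f h.

Definition kernel_mx := 'I_p -> 'I_p -> {poly {poly C}} -> C.
Definition is_kernel_mx (w : kernel_mx) : Prop :=
  forall k l, lin_functional2 (w k l).

Definition functional_mx := 'I_p -> 'I_p -> {poly C} -> C.
Definition is_functional_mx (b : functional_mx) : Prop :=
  forall k l, lin_functional (b k l).

Definition polyX (f : {poly C}) : {poly {poly C}} := f%:P.
Definition polyY (f : {poly C}) : {poly {poly C}} := map_poly polyC f.

Definition bform (w : kernel_mx) (P Q : 'M[{poly C}]_p) : 'M[C]_p :=
  \matrix_(i, j) \sum_k \sum_l w k l (polyX (P i k) * polyY (Q j l)).

Definition gram (w : kernel_mx) (k l : nat) : 'M[C]_p :=
  bform w ('X^k)%:M ('X^l)%:M.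

Definition quasidefinite (w : kernel_mx) : Prop :=
  forall n : nat, (\mxblock_(i < n.+1, j < n.+1) gram w i j) \in unitmx.

Definition monic_mxpoly (n : nat) (P : 'M[{poly C}]_p) : Prop :=
  forall i j, (size (P i j - (i == j)%:R * 'X^n)%R <= n)%N.

Definition biorthogonal_families (w : kernel_mx) (P1 P2 : nat -> 'M[{poly C}]_p) :
  Prop :=
  (forall n, monic_mxpoly n (P1 n)) /\ (forall n, monic_mxpoly n (P2 n)) /\
  (forall n m, n != m -> bform w (P1 n) (P2 m) = 0).

Definition Hnorm (w : kernel_mx) (P1 P2 : nat -> 'M[{poly C}]_p) (n : nat) :
  'M[C]_p := bform w (P1 n) (P2 n).

Definition CDkernel (w : kernel_mx) (P1 P2 : nat -> 'M[{poly C}]_p) (n : nat) :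
  'M[{poly {poly C}}]_p :=
  \sum_(k < n.+1)
    ((map_mx polyY (P2 k))^T *m map_mx (fun c : C => c%:P%:P) (invmx (Hnorm w P1 P2 k))
       *m map_mx polyX (P1 k)).

Definition pairR (P : 'M[{poly C}]_p) (b : functional_mx) : 'M[C]_p :=
  \matrix_(i, l) \sum_k b k l (P i k).
Definition pairL (b : functional_mx) (P : 'M[{poly C}]_p) : 'M[C]_p :=
  \matrix_(k, j) \sum_l b k l (P l j).

(* <K(x,y), b_x>, with y held fixed: a matrix polynomial in y *)
Definition pairR2 (K : 'M[{poly {poly C}}]_p) (b : functional_mx) :
  'M[{poly C}]_p :=
  \matrix_(i, l) \sum_k map_poly (b k l) (K i k).

(* Uvarov data: q nodes xs : 'I_q -> R, multiplicities kappa, and functionals *)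
(* beta j m for m < kappa j.  The index set of the N = sum_j kappa j blocks is *)
(* T := {j : 'I_q & 'I_(kappa j)}, enumerated by enum_val.                    *)
Variables (q : nat) (xs : 'I_q -> R) (kappa : 'I_q -> nat).
Variable beta : forall j : 'I_q, 'I_(kappa j) -> functional_mx.

Definition Tidx := {j : 'I_q & 'I_(kappa j)}.
Definition Nb := #|{: Tidx}|.
Definition node (t : Tidx) : C := ((xs (tag t))%:C)%C.
Definition ord_of (t : Tidx) : nat := tagged t.
Definition betaT (t : Tidx) : functional_mx := beta (tagged t).
Definition blk (a : 'I_Nb) : Tidx := enum_val a.

Definition vpert : kernel_mx := fun k l f =>
  \sum_(t : Tidx) betaT t k l ((f^`N(ord_of t)).[(node t)%:P]).
Definition uhat (u : kernel_mx) : kernel_mx := fun k l f => u k l f + vpert k l f.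

Definition jet (P : 'M[{poly C}]_p) : 'M[C]_(p, \sum_(a < Nb) p) :=
  \mxrow_(a < Nb) map_mx (fun g : {poly C} => (g^`N(ord_of (blk a))).[node (blk a)]) P.

Definition J01blk (K : 'M[{poly {poly C}}]_p) (a : 'I_Nb) : 'M[{poly C}]_p :=
  map_mx (fun g : {poly {poly C}} => (g^`N(ord_of (blk a))).[(node (blk a))%:P]) K.
Definition J01 (K : 'M[{poly {poly C}}]_p) : 'M[{poly C}]_(\sum_(a < Nb) p, p) :=
  \mxcol_(a < Nb) J01blk K a.

Definition pairRbeta (P : 'M[{poly C}]_p) : 'M[C]_(p, \sum_(a < Nb) p) :=
  \mxrow_(a < Nb) pairR P (betaT (blk a)).
Definition pairR2beta (K : 'M[{poly {poly C}}]_p) : 'M[{poly C}]_(p, \sum_(a < Nb) p) :=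
  \mxrow_(a < Nb) pairR2 K (betaT (blk a)).

Definition Mmat (K : 'M[{poly {poly C}}]_p) : 'M[C]_(\sum_(a < Nb) p) :=
  1%:M + \mxblock_(a < Nb, b < Nb) pairR (J01blk K a) (betaT (blk b)).

Definition beta_lin_indep : Prop :=
  (forall X : forall j : 'I_q, 'I_(kappa j) -> 'M[C]_p,
     (forall k l (f : {poly C}),
        \sum_(t : Tidx) \sum_r betaT t k r f * X (tag t) (tagged t) r l = 0) ->
     forall j m, X j m = 0) /\
  (forall Y : forall j : 'I_q, 'I_(kappa j) -> 'M[C]_p,
     (forall k l (f : {poly C}),
        \sum_(t : Tidx) \sum_r Y (tag t) (tagged t) k r * betaT t r l f = 0) ->
     forall j m, Y j m = 0).

Definition KerR (P : 'M[{poly C}]_p) : Prop :=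
  forall t : Tidx, pairL (betaT t) P = 0.
Definition ideal_gen : {poly C} := \prod_(j < q) ('X - ((xs j)%:C)%C%:P) ^+ kappa j.
Definition in_ideal (P : 'M[{poly C}]_p) : Prop :=
  exists A : 'M[{poly C}]_p, P = ideal_gen *: A.

Definition perpR_trivial (w : kernel_mx) (S : 'M[{poly C}]_p -> Prop) : Prop :=
  forall Q, (forall P, S P -> bform w P Q = 0) -> Q = 0.
Definition perpL_trivial (w : kernel_mx) (S : 'M[{poly C}]_p -> Prop) : Prop :=
  forall Q, (forall P, S P -> bform w Q P = 0) -> Q = 0.

End Uvarov.

(* Main.v *)
Require Import Defs.
From HB Require Import structures.
From mathcomp Require Import all_boot all_order all_algebra.
From mathcomp Require Import reals complex.
Import Order.TTheory GRing.Theory Num.Theory.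
Local Open Scope ring_scope.
Set Implicit Arguments. Unset Strict Implicit. Unset Printing Implicit Defensive.

Section Gen.
Variable R : realType.
Local Notation C := (R[i]).
Variable p : nat.
Local Notation PM := 'M[{poly C}]_p.

Definition cst m n (A : 'M[C]_(m, n)) : 'M[{poly C}]_(m, n) := map_mx polyC A.

Lemma cstM m n k (A : 'M[C]_(m, n)) (B : 'M[C]_(n, k)) : cst (A *m B) = cst A *m cst B.
Proof. exact: map_mxM. Qed.
Lemma cstD m n (A B : 'M[C]_(m, n)) : cst (A + B) = cst A + cst B.
Proof. exact: map_mxD. Qed.
Lemma cstN m n (A : 'M[C]_(m, n)) : cst (- A) = - cst A.
Proof. exact: map_mxN. Qed.
Lemma cst1 n : cst (1 : 'M[C]_n) = 1.
Proof. exact: map_mx1. Qed.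
Lemma cst0 m n : cst (0 : 'M[C]_(m,n)) = 0.
Proof. exact: map_mx0. Qed.
Lemma cst_tr m n (A : 'M[C]_(m, n)) : (cst A)^T = cst A^T.
Proof. by rewrite /cst map_trmx. Qed.
Lemma cst_sum m n (I : finType) (F : I -> 'M[C]_(m, n)) :
  cst (\sum_i F i) = \sum_i cst (F i).
Proof. by rewrite /cst; apply: (big_morph _ (@map_mxD _ _ _ _ _) (map_mx0 _ _ _)). Qed.

Definition gf (bf : PM -> PM -> 'M[C]_p) : Prop :=
  (forall (A : 'M[C]_p) P P' Q, bf (cst A *m P + P') Q = A *m bf P Q + bf P' Q) /\
  (forall (A : 'M[C]_p) P Q Q', bf P (cst A *m Q + Q') = bf P Q *m A^T + bf P Q').

Section GF.
Variable bf : PM -> PM -> 'M[C]_p.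
Hypothesis hbf : gf bf.

Lemma gfDl P P' Q : bf (P + P') Q = bf P Q + bf P' Q.
Proof. by have := (proj1 hbf) 1 P P' Q; rewrite cst1 !mul1mx. Qed.
Lemma gfDr P Q Q' : bf P (Q + Q') = bf P Q + bf P Q'.
Proof. by have := (proj2 hbf) 1 P Q Q'; rewrite cst1 trmx1 !mul1mx mulmx1. Qed.
Lemma gf0l Q : bf 0 Q = 0.
Proof. by have := gfDl 0 0 Q; rewrite addr0 => /(congr1 (fun z => z - bf 0 Q)); rewrite subrr addrK. Qed.
Lemma gf0r P : bf P 0 = 0.
Proof. by have := gfDr P 0 0; rewrite addr0 => /(congr1 (fun z => z - bf P 0)); rewrite subrr addrK. Qed.
Lemma gfMl A P Q : bf (cst A *m P) Q = A *m bf P Q.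
Proof. by have := (proj1 hbf) A P 0 Q; rewrite !addr0 gf0l addr0. Qed.
Lemma gfMr A P Q : bf P (cst A *m Q) = bf P Q *m A^T.
Proof. by have := (proj2 hbf) A P Q 0; rewrite !addr0 gf0r addr0. Qed.
Lemma gfNl P Q : bf (- P) Q = - bf P Q.
Proof. have -> : - P = cst (- 1 : 'M[C]_p) *m P by rewrite cstN cst1 mulNmx mul1mx.
by rewrite gfMl mulNmx mul1mx. Qed.
Lemma gfNr P Q : bf P (- Q) = - bf P Q.
Proof. have -> : - Q = cst (- 1 : 'M[C]_p) *m Q by rewrite cstN cst1 mulNmx mul1mx.
by rewrite gfMr linearN /= trmx1 mulmxN mulmx1. Qed.
Lemma gfBl P P' Q : bf (P - P') Q = bf P Q - bf P' Q.
Proof. by rewrite gfDl gfNl. Qed.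
Lemma gfBr P Q Q' : bf P (Q - Q') = bf P Q - bf P Q'.
Proof. by rewrite gfDr gfNr. Qed.
Lemma gf_suml (I : finType) (F : I -> PM) Q : bf (\sum_i F i) Q = \sum_i bf (F i) Q.
Proof. by apply: (big_morph (fun P => bf P Q)) => [P P'|]; [exact: gfDl | exact: gf0l]. Qed.
Lemma gf_sumr (I : finType) (F : I -> PM) P : bf P (\sum_i F i) = \sum_i bf P (F i).
Proof. by apply: (big_morph (fun Q => bf P Q)) => [Q Q'|]; [exact: gfDr | exact: gf0r]. Qed.
End GF.

Lemma gf_add bf bf' : gf bf -> gf bf' -> gf (fun P Q => bf P Q + bf' P Q).
Proof.
move=> [h1 h2] [h1' h2']; split=> *.
  by rewrite h1 h1' mulmxDr addrACA.
by rewrite h2 h2' mulmxDl addrACA.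
Qed.


Definition deg_le r c m (A : 'M[{poly C}]_(r, c)) := forall i j, (size (A i j) <= m)%N.
Definition coefm r c k (A : 'M[{poly C}]_(r, c)) : 'M[C]_(r, c) := map_mx (fun g : {poly C} => g`_k) A.
Definition Xm k : PM := ('X^k)%:M.

Lemma expand r c m (A : 'M[{poly C}]_(r, c)) : deg_le m A ->
  A = \sum_(k < m) cst (coefm k A) *m ('X^k)%:M.
Proof.
move=> hA; apply/matrixP => i j; rewrite summxE.
under eq_bigr do rewrite mul_mx_scalar !mxE.
apply/polyP => d; rewrite coef_sum.
under eq_bigr do rewrite mulrC coefCM coefXn.
case: (ltnP d m) => hd.
  rewrite (bigD1 (Ordinal hd)) //= eqxx mulr1 big1 ?addr0 // => k hk.
  suff -> : (d == k) = false by rewrite mulr0.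
  by apply/negbTE; apply: contra hk => /eqP e; apply/eqP/val_inj.
rewrite big1; first by rewrite nth_default // (leq_trans (hA i j) hd).
by move=> k _; case: eqP => [e|]; rewrite ?mulr0 //; move: (ltn_ord k); rewrite -e ltnNge hd.
Qed.

Lemma deg_le_add r c m (A B : 'M[{poly C}]_(r, c)) : deg_le m A -> deg_le m B -> deg_le m (A + B).
Proof. by move=> hA hB i j; rewrite mxE (leq_trans (size_polyD _ _)) // geq_max hA hB. Qed.
Lemma deg_le_opp r c m (A : 'M[{poly C}]_(r, c)) : deg_le m A -> deg_le m (- A).
Proof. by move=> hA i j; rewrite mxE size_polyN. Qed.
Lemma deg_le_sub r c m (A B : 'M[{poly C}]_(r, c)) : deg_le m A -> deg_le m B -> deg_le m (A - B).
Proof. by move=> hA hB; apply: deg_le_add => //; apply: deg_le_opp. Qed.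
Lemma deg_le0 r c m : deg_le m (0 : 'M[{poly C}]_(r, c)).
Proof. by move=> i j; rewrite mxE size_poly0. Qed.
Lemma deg_le_sum r c m (I : finType) (F : I -> 'M[{poly C}]_(r, c)) :
  (forall i, deg_le m (F i)) -> deg_le m (\sum_i F i).
Proof.
move=> h; apply: (big_ind (fun A => deg_le m A)) => //; first exact: deg_le0.
by move=> A B; apply: deg_le_add.
Qed.
Lemma deg_le_cstM r c d m (A : 'M[C]_(r, c)) (B : 'M[{poly C}]_(c, d)) :
  deg_le m B -> deg_le m (cst A *m B).
Proof.
move=> hB i j; rewrite mxE; apply: (big_ind (fun g : {poly C} => size g <= m)%N).
- by rewrite size_poly0.
- by move=> g h hg hh; rewrite (leq_trans (size_polyD _ _)) // geq_max hg hh.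
by move=> k _; rewrite mxE mul_polyC (leq_trans (size_scale_leq _ _)) // hB.
Qed.
Lemma deg_le_Mcst r c d m (A : 'M[{poly C}]_(r, c)) (B : 'M[C]_(c, d)) :
  deg_le m A -> deg_le m (A *m cst B).
Proof.
move=> hA i j; rewrite mxE; apply: (big_ind (fun g : {poly C} => size g <= m)%N).
- by rewrite size_poly0.
- by move=> g h hg hh; rewrite (leq_trans (size_polyD _ _)) // geq_max hg hh.
by move=> k _; rewrite mxE mulrC mul_polyC (leq_trans (size_scale_leq _ _)) // hA.
Qed.
Lemma deg_le_mono r c m m' (A : 'M[{poly C}]_(r, c)) : (m <= m')%N -> deg_le m A -> deg_le m' A.
Proof. by move=> h hA i j; apply: leq_trans (hA i j) h. Qed.
Lemma deg_le_tr r c m (A : 'M[{poly C}]_(r, c)) : deg_le m A -> deg_le m A^T.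
Proof. by move=> hA i j; rewrite mxE. Qed.

Lemma Xm_entry k (i j : 'I_p) : Xm k i j = (i == j)%:R * 'X^k.
Proof. by rewrite !mxE mulr_natl. Qed.

Lemma monic_diff k (P : PM) : monic_mxpoly k P -> deg_le k (P - Xm k).
Proof. by move=> h i j; rewrite !mxE -mulr_natl; apply: h. Qed.
Lemma monic_deg k (P : PM) : monic_mxpoly k P -> deg_le k.+1 P.
Proof.
move=> h; have -> : P = (P - Xm k) + Xm k by rewrite subrK.
apply: deg_le_add; first by apply: deg_le_mono (leqnSn _) (monic_diff h).
by move=> i j; rewrite Xm_entry; case: (i == j); rewrite ?mul1r ?mul0r ?size_polyXn ?size_poly0.
Qed.
Lemma monic_sub k (P P' : PM) : monic_mxpoly k P -> monic_mxpoly k P' -> deg_le k (P - P').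
Proof.
move=> h h'; have -> : P - P' = (P - Xm k) - (P' - Xm k) by rewrite opprB addrA subrK.
by apply: deg_le_sub; apply: monic_diff.
Qed.
Lemma monic_coef k (P : PM) : monic_mxpoly k P -> coefm k P = 1.
Proof.
move=> h; apply/matrixP => i j; rewrite !mxE.
have := h i j; set D := (_ - _) => hD.
have -> : P i j = D + (i == j)%:R * 'X^k by rewrite /D subrK.
rewrite coefD (nth_default _ hD) add0r mulr_natl coefMn coefXn eqxx.
by case: (i == j); rewrite ?mulr1n ?mulr0n.
Qed.

End Gen.

Section Nondeg.
Variable R : realType.
Local Notation C := (R[i]).
Variable p : nat.
Local Notation PM := 'M[{poly C}]_p.
Variable bf : PM -> PM -> 'M[C]_p.
Hypothesis hbf : gf bf.
Hypothesis qd : forall n, \mxblock_(i < n.+1, j < n.+1) bf (Xm R p i) (Xm R p j) \in unitmx.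

Lemma nondegL n (A : PM) : deg_le n.+1 A ->
  (forall l, (l <= n)%N -> bf A (Xm R p l) = 0) -> A = 0.
Proof.
move=> hA h0.
pose Ak (k : 'I_n.+1) := coefm k A.
have hexp l : bf A (Xm R p l) = \sum_(k < n.+1) Ak k *m bf (Xm R p k) (Xm R p l).
  rewrite {1}(expand hA) gf_suml //; apply: eq_bigr => k _; exact: gfMl.
suff hk : forall k, Ak k = 0.
  by rewrite (expand hA) big1 // => k _; rewrite -/(Ak k) hk cst0 mul0mx.
move=> k; apply/row_matrixP => i; rewrite row0.
pose c := \mxrow_(k < n.+1) row i (Ak k).
have hc : c *m \mxblock_(i < n.+1, j < n.+1) bf (Xm R p i) (Xm R p j) = 0.
  rewrite mul_mxrow_mxblock -(mxrow0 (q_ := fun _ : 'I_n.+1 => p)).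
  apply: eq_mxrow => l.
  have hl : (l <= n)%N by rewrite -ltnS.
  rewrite -[RHS](row0 _ _ i) -(h0 l hl) hexp raddf_sum /=.
  by apply: eq_bigr => k' _; rewrite row_mul.
have c0 : c = 0.
  by rewrite -(mulmxK (qd n) c) hc mul0mx.
by have := mxrowK (fun k => row i (Ak k)) k; rewrite -/c c0 submxrow0.
Qed.

Lemma nondegR n (A : PM) : deg_le n.+1 A ->
  (forall k, (k <= n)%N -> bf (Xm R p k) A = 0) -> A = 0.
Proof.
move=> hA h0.
pose Al (l : 'I_n.+1) := coefm l A.
have hexp k : bf (Xm R p k) A = \sum_(l < n.+1) bf (Xm R p k) (Xm R p l) *m (Al l)^T.
  rewrite {1}(expand hA) gf_sumr //; apply: eq_bigr => l _; exact: gfMr.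
suff hl : forall l, (Al l)^T = 0.
  rewrite (expand hA) big1 // => l _.
  by rewrite -/(Al l) -[Al l]trmxK hl trmx0 cst0 mul0mx.
move=> l; apply/matrixP => a j; rewrite mxE.
suff : col j (Al l)^T = 0 by move/(congr1 (fun M : 'cV[C]_p => M a 0)); rewrite !mxE.
pose c := \mxcol_(l < n.+1) col j (Al l)^T.
have hc : \mxblock_(i < n.+1, j < n.+1) bf (Xm R p i) (Xm R p j) *m c = 0.
  rewrite mul_mxblock_mxrow -(mxcol0 (p_ := fun _ : 'I_n.+1 => p)).
  apply: eq_mxcol => k.
  have hk : (k <= n)%N by rewrite -ltnS.
  rewrite -[RHS](col0 _ _ j) -(h0 k hk) hexp raddf_sum /=.
  by apply: eq_bigr => l' _; rewrite !colE mulmxA.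
have c0 : c = 0.
  by rewrite -(mulKmx (qd n) c) hc mulmx0.
by have := mxcolK (fun l => col j (Al l)^T) l; rewrite -/c c0 submxcol0.
Qed.

Lemma spanR (F : nat -> PM) (A : PM) n : (forall k, monic_mxpoly k (F k)) ->
  (forall l, (l <= n)%N -> bf A (F l) = 0) ->
  forall l, (l <= n)%N -> bf A (Xm R p l) = 0.
Proof.
move=> hF h0; elim/ltn_ind => l IH hl.
have hD := monic_diff (hF l).
have -> : Xm R p l = F l - (F l - Xm R p l) by rewrite opprB addrC subrK.
rewrite gfBr // h0 // (expand hD) gf_sumr // big1 ?subr0 // => k _.
by rewrite gfMr // IH ?mul0mx // (leq_trans _ hl) // ltnW.
Qed.

Lemma spanL (F : nat -> PM) (A : PM) n : (forall k, monic_mxpoly k (F k)) ->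
  (forall l, (l <= n)%N -> bf (F l) A = 0) ->
  forall l, (l <= n)%N -> bf (Xm R p l) A = 0.
Proof.
move=> hF h0; elim/ltn_ind => l IH hl.
have hD := monic_diff (hF l).
have -> : Xm R p l = F l - (F l - Xm R p l) by rewrite opprB addrC subrK.
rewrite gfBl // h0 // (expand hD) gf_suml // big1 ?subr0 // => k _.
by rewrite gfMl // IH ?mulmx0 // (leq_trans _ hl) // ltnW.
Qed.

End Nondeg.

Section Lin.
Variable R : realType.
Local Notation C := (R[i]).

Section L1.
Variable f : {poly C} -> C.
Hypothesis hf : lin_functional f.
Lemma lf0 : f 0 = 0.
Proof. by have := hf 1 0 0; rewrite addr0 scaler0 => /(congr1 (fun z => z - f 0)); rewrite subrr mul1r addrK. Qed.
Lemma lfD g h : f (g + h) = f g + f h.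
Proof. by have := hf 1 g h; rewrite scale1r mul1r. Qed.
Lemma lfZ a g : f (a *: g) = a * f g.
Proof. by have := hf a g 0; rewrite !addr0 lf0 addr0. Qed.
Lemma lfN g : f (- g) = - f g.
Proof. by rewrite -scaleN1r lfZ mulN1r. Qed.
Lemma lf_sum (I : finType) (F : I -> {poly C}) : f (\sum_i F i) = \sum_i f (F i).
Proof. by apply: (big_morph f lfD lf0). Qed.
End L1.

Section L2.
Variable f : {poly {poly C}} -> C.
Hypothesis hf : lin_functional2 f.
Lemma lf20 : f 0 = 0.
Proof. by have := hf 1 0 0; rewrite mulr0 addr0 => /(congr1 (fun z => z - f 0)); rewrite subrr mul1r addrK. Qed.
Lemma lf2D g h : f (g + h) = f g + f h.
Proof. by have := hf 1 g h; rewrite !polyC1 !mul1r. Qed.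
Lemma lf2M a g : f (a%:P%:P * g) = a * f g.
Proof. by have := hf a g 0; rewrite !addr0 lf20 addr0. Qed.
Lemma lf2_sum (I : finType) (F : I -> {poly {poly C}}) : f (\sum_i F i) = \sum_i f (F i).
Proof. by apply: (big_morph f lf2D lf20). Qed.
End L2.

Lemma map_mx_cstM (f : {poly C} -> C) m n k (A : 'M[C]_(m, n)) (P P' : 'M[{poly C}]_(n, k)) P'' :
  lin_functional f -> P'' = cst A *m P ->
  map_mx f P'' = A *m map_mx f P.
Proof.
move=> hf ->; apply/matrixP => i j; rewrite !mxE lf_sum //; apply: eq_bigr => r _.
by rewrite !mxE mul_polyC lfZ.
Qed.

End Lin.

Section BF.
Variable R : realType.
Local Notation C := (R[i]).
Variable p : nat.
Local Notation PM := 'M[{poly C}]_p.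

Lemma polyX_cstM (A : 'M[C]_p) (P : PM) i k :
  Defs.polyX ((cst A *m P) i k) = \sum_r (A i r)%:P%:P * Defs.polyX (P r k).
Proof. by rewrite mxE /Defs.polyX rmorph_sum; apply: eq_bigr => r _; rewrite mxE rmorphM. Qed.

Lemma polyY_cstM (A : 'M[C]_p) (P : PM) i k :
  polyY ((cst A *m P) i k) = \sum_r (A i r)%:P%:P * polyY (P r k).
Proof.
rewrite mxE /polyY rmorph_sum; apply: eq_bigr => r _.
by rewrite mxE rmorphM /= map_polyC.
Qed.

Lemma lf2_comb (f : {poly {poly C}} -> C) (a : 'I_p -> C) G H : lin_functional2 f ->
  f (\sum_r (a r)%:P%:P * G r + H) = \sum_r a r * f (G r) + f H.
Proof.
move=> hf; rewrite lf2D // lf2_sum //; congr (_ + _).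
by apply: eq_bigr => r _; rewrite lf2M.
Qed.

Lemma gf_bform (u : kernel_mx R p) : is_kernel_mx u -> gf (bform u).
Proof.
move=> hu; split=> A P P' Q; apply/matrixP => i j; rewrite !mxE.
- have e1 k l : u k l (Defs.polyX ((cst A *m P + P') i k) * polyY (Q j l)) =
     \sum_r A i r * u k l (Defs.polyX (P r k) * polyY (Q j l)) +
     u k l (Defs.polyX (P' i k) * polyY (Q j l)).
    rewrite mxE /Defs.polyX polyCD -/(Defs.polyX _) polyX_cstM mulrDl mulr_suml.
    rewrite -lf2_comb //; congr (u k l (_ + _)); apply: eq_bigr => r _; by rewrite mulrA.
  rewrite (eq_bigr _ (fun k _ => eq_bigr _ (fun l _ => e1 k l))).
  under eq_bigr do rewrite big_split /=.
  rewrite big_split /=; congr (_ + _).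
  under [RHS]eq_bigr do rewrite mxE big_distrr /=.
  rewrite [RHS]exchange_big /=; apply: eq_bigr => k _.
  under [RHS]eq_bigr do rewrite big_distrr /=.
  rewrite [RHS]exchange_big /=; apply: eq_bigr => l _.
  done.
- have e1 k l : u k l (Defs.polyX (P i k) * polyY ((cst A *m P' + Q) j l)) =
     \sum_r A j r * u k l (Defs.polyX (P i k) * polyY (P' r l)) +
     u k l (Defs.polyX (P i k) * polyY (Q j l)).
    rewrite mxE /polyY rmorphD /= -/(polyY _) -/(polyY _) polyY_cstM mulrDr mulr_sumr.
    rewrite -lf2_comb //; congr (u k l (_ + _)); apply: eq_bigr => r _; by rewrite mulrCA.
  rewrite (eq_bigr _ (fun k _ => eq_bigr _ (fun l _ => e1 k l))).
  under eq_bigr do rewrite big_split /=.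
  rewrite big_split /=; congr (_ + _).
  under [RHS]eq_bigr do rewrite !mxE mulrC big_distrr /=.
  rewrite [RHS]exchange_big /=; apply: eq_bigr => k _.
  under [RHS]eq_bigr do rewrite big_distrr /=.
  rewrite [RHS]exchange_big /=; apply: eq_bigr => l _.
  done.
Qed.

End BF.

Section Uv.
Variable R : realType.
Local Notation C := (R[i]).
Variable p : nat.
Local Notation PM := 'M[{poly C}]_p.
Variables (q : nat) (xs : 'I_q -> R) (kappa : 'I_q -> nat).
Variable beta : forall j : 'I_q, 'I_(kappa j) -> functional_mx R p.
Arguments beta : clear implicits.
Hypothesis hbeta : forall j m, is_functional_mx (beta j m).
Local Notation Nb := (Nb kappa).

Definition jb (a : 'I_Nb) (g : {poly C}) : C := (g^`N(ord_of (blk a))).[node xs (blk a)].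
Definition jetblk (a : 'I_Nb) (P : PM) : 'M[C]_p := map_mx (jb a) P.
Lemma jetE P : jet xs kappa P = \mxrow_a jetblk a P.
Proof. by []. Qed.

Lemma lin_jb a : lin_functional (jb a).
Proof. by move=> c g h; rewrite /jb nderivnD nderivnZ hornerD hornerZ. Qed.

Lemma hbetaT t k l : lin_functional (betaT beta t k l).
Proof. exact: hbeta. Qed.

Lemma deriv_eval (f g : {poly C}) m c :
  ((Defs.polyX f * polyY g)^`N(m)).[c%:P] = (g^`N(m)).[c] *: f.
Proof.
rewrite /Defs.polyX mul_polyC nderivnZ hornerZ /polyY nderivn_map horner_map /=.
by rewrite mulrC mul_polyC.
Qed.

Lemma bform_vpert (P Q : PM) :
  bform (vpert xs beta) P Q = pairRbeta beta P *m (jet xs kappa Q)^T.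
Proof.
rewrite jetE tr_mxrow mul_mxrow_mxcol; apply/matrixP => i j.
rewrite !mxE summxE.
have e1 k l (t : Tidx kappa) : betaT beta t k l
   ((Defs.polyX (P i k) * polyY (Q j l))^`N(ord_of t)).[(node xs t)%:P] =
   ((Q j l)^`N(ord_of t)).[node xs t] * betaT beta t k l (P i k).
  by rewrite deriv_eval lfZ //; apply: hbetaT.
rewrite (eq_bigr _ (fun k _ => eq_bigr _ (fun l _ => eq_bigr _ (fun t _ => e1 k l t)))).
have e2 (F : Tidx kappa -> C) : \sum_t F t = \sum_(a < Nb) F (blk a).
  by rewrite /blk -big_enum_val.
under eq_bigr do under eq_bigr do rewrite e2.
rewrite [LHS]exchange_big /=.
under eq_bigr do rewrite exchange_big /=.
rewrite [LHS]exchange_big /=; apply: eq_bigr => a _.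
rewrite mxE; apply: eq_bigr => l _.
rewrite !mxE big_distrl /=; apply: eq_bigr => k _.
by rewrite mulrC.
Qed.


Lemma pairR_cstM (A : 'M[C]_p) (P P' : PM) (b : functional_mx R p) : is_functional_mx b ->
  pairR (cst A *m P + P') b = A *m pairR P b + pairR P' b.
Proof.
move=> hb; apply/matrixP => i l; rewrite !mxE.
under eq_bigr do rewrite mxE (lfD (hb _ _)) mxE (lf_sum (hb _ _)).
rewrite big_split /=; congr (_ + _).
under eq_bigr do under eq_bigr do rewrite mxE mul_polyC (lfZ (hb _ _)).
rewrite exchange_big /=; apply: eq_bigr => r _.
by rewrite mxE big_distrr.
Qed.

Lemma jetblk_cstM (A : 'M[C]_p) (P P' : PM) a :
  jetblk a (cst A *m P + P') = A *m jetblk a P + jetblk a P'.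
Proof.
apply/matrixP => i l; rewrite /jetblk !mxE (lfD (lin_jb a)) (lf_sum (lin_jb a)); congr (_ + _).
by apply: eq_bigr => r _; rewrite !mxE mul_polyC (lfZ (lin_jb a)).
Qed.

Lemma pairRbeta_cstM (A : 'M[C]_p) (P P' : PM) :
  pairRbeta beta (cst A *m P + P') = A *m pairRbeta beta P + pairRbeta beta P'.
Proof.
rewrite /pairRbeta mul_mxrow -mxrowD; apply: eq_mxrow => a.
by apply: pairR_cstM; apply: hbeta.
Qed.

Lemma jet_cstM (A : 'M[C]_p) (P P' : PM) :
  jet xs kappa (cst A *m P + P') = A *m jet xs kappa P + jet xs kappa P'.
Proof.
rewrite !jetE mul_mxrow -mxrowD; apply: eq_mxrow => a; exact: jetblk_cstM.
Qed.

Lemma gf_vpert : gf (bform (vpert xs beta)).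
Proof.
split=> A P P' Q; rewrite !bform_vpert.
  by rewrite pairRbeta_cstM mulmxDl mulmxA.
by rewrite jet_cstM linearD /= trmx_mul mulmxDr mulmxA.
Qed.

Lemma bform_uhat (u : kernel_mx R p) P Q :
  bform (uhat xs beta u) P Q = bform u P Q + bform (vpert xs beta) P Q.
Proof.
apply/matrixP => i j; rewrite !mxE -big_split; apply: eq_bigr => k _.
by rewrite -big_split.
Qed.

Lemma gf_uhat (u : kernel_mx R p) : is_kernel_mx u -> gf (bform (uhat xs beta u)).
Proof.
move=> hu; have := gf_add (gf_bform hu) gf_vpert.
move=> [h1 h2]; split=> *; rewrite !bform_uhat; [exact: h1 | exact: h2].
Qed.

End Uv.

Section Ker.
Variable R : realType.
Local Notation C := (R[i]).
Variable p : nat.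
Local Notation PM := 'M[{poly C}]_p.
Variables (q : nat) (xs : 'I_q -> R) (kappa : 'I_q -> nat).
Variable beta : forall j : 'I_q, 'I_(kappa j) -> functional_mx R p.
Arguments beta : clear implicits.
Hypothesis hbeta : forall j m, is_functional_mx (beta j m).
Local Notation Nb := (Nb kappa).

Definition phi (a : 'I_Nb) (g : {poly {poly C}}) : {poly C} :=
  (g^`N(ord_of (blk a))).[(node xs (blk a))%:P].

Lemma phiD a g h : phi a (g + h) = phi a g + phi a h.
Proof. by rewrite /phi nderivnD hornerD. Qed.
Lemma phi0 a : phi a 0 = 0.
Proof. by rewrite /phi linear0 horner0. Qed.
Lemma phi_sum a (I : finType) (F : I -> {poly {poly C}}) : phi a (\sum_i F i) = \sum_i phi a (F i).
Proof. exact: (big_morph _ (phiD a) (phi0 a)). Qed.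
Lemma phi_prod a f g : phi a (polyY f * Defs.polyX g) = jb xs a f *: g.
Proof. by rewrite /phi mulrC deriv_eval. Qed.

Lemma J01blk_prod (A B : PM) (a : 'I_Nb) :
  J01blk xs (map_mx (@polyY R) A *m map_mx (@Defs.polyX R) B) a = cst (jetblk xs a A) *m B.
Proof.
apply/matrixP => i j; rewrite !mxE -/(phi a _) phi_sum; apply: eq_bigr => r _.
by rewrite !mxE phi_prod mul_polyC.
Qed.

Lemma J01blk_sum (I : finType) (F : I -> 'M[{poly {poly C}}]_p) (a : 'I_Nb) :
  J01blk xs (\sum_i F i) a = \sum_i J01blk xs (F i) a.
Proof.
apply/matrixP => i j; rewrite !mxE summxE -/(phi a _) phi_sum summxE; apply: eq_bigr => r _.
by rewrite !mxE.
Qed.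

Section MP.
Variable b : {poly C} -> C.
Hypothesis hb : lin_functional b.
Lemma map_polyD_lin g h : map_poly b (g + h) = map_poly b g + map_poly b h.
Proof. by apply/polyP => d; rewrite coefD !coef_map_id0 ?(lf0 hb) // coefD (lfD hb). Qed.
Lemma map_poly0_lin : map_poly b 0 = 0.
Proof. by apply/polyP => d; rewrite coef_map_id0 ?(lf0 hb) // !coef0 (lf0 hb). Qed.
Lemma map_poly_sum_lin (I : finType) (F : I -> {poly {poly C}}) :
  map_poly b (\sum_i F i) = \sum_i map_poly b (F i).
Proof. exact: (big_morph _ map_polyD_lin map_poly0_lin). Qed.
Lemma map_poly_prod f g : map_poly b (polyY f * Defs.polyX g) = b g *: f.
Proof.
apply/polyP => d; rewrite coef_map_id0 ?(lf0 hb) // /Defs.polyX mulrC mul_polyC.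
by rewrite coefZ /polyY coef_map /= mulrC mul_polyC (lfZ hb) coefZ mulrC.
Qed.
End MP.

Lemma pairR2_prod (A B : PM) (b : functional_mx R p) : is_functional_mx b ->
  pairR2 (map_mx (@polyY R) A *m map_mx (@Defs.polyX R) B) b = A *m cst (pairR B b).
Proof.
move=> hb; apply/matrixP => i l; rewrite !mxE.
under eq_bigr do rewrite mxE (map_poly_sum_lin (hb _ _)).
rewrite exchange_big /=; apply: eq_bigr => r _.
under eq_bigr do rewrite !mxE (map_poly_prod (hb _ _)).
by rewrite !mxE -scaler_suml mulrC mul_polyC.
Qed.

Lemma pairR2_sum (I : finType) (F : I -> 'M[{poly {poly C}}]_p) (b : functional_mx R p) :
  is_functional_mx b -> pairR2 (\sum_i F i) b = \sum_i pairR2 (F i) b.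
Proof.
move=> hb; apply/matrixP => i l; rewrite !mxE summxE.
under eq_bigr do rewrite summxE (map_poly_sum_lin (hb _ _)).
rewrite exchange_big /=; apply: eq_bigr => r _.
by rewrite !mxE.
Qed.

End Ker.

Section Abs.
Variable R : realType.
Local Notation C := (R[i]).
Variable p : nat.
Local Notation PM := 'M[{poly C}]_p.

Lemma coefm_cstM k (Z : 'M[C]_p) (P : PM) : coefm k (cst Z *m P) = Z *m coefm k P.
Proof.
apply/matrixP => i j; rewrite !mxE coef_sum; apply: eq_bigr => r _.
by rewrite !mxE coefCM.
Qed.

Variable bf : PM -> PM -> 'M[C]_p.
Hypothesis hbf : gf bf.
Hypothesis qd : forall n, \mxblock_(i < n.+1, j < n.+1) bf (Xm R p i) (Xm R p j) \in unitmx.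
Variables F1 F2 : nat -> PM.
Hypothesis hF1 : forall k, monic_mxpoly k (F1 k).
Hypothesis hF2 : forall k, monic_mxpoly k (F2 k).
Hypothesis horth : forall n m, n != m -> bf (F1 n) (F2 m) = 0.

Lemma orthXR m l : (l <= m)%N -> bf (F1 m.+1) (Xm R p l) = 0.
Proof.
apply: (spanR hbf hF2) => l' hl'; apply: horth.
by rewrite eq_sym neq_ltn ltnS hl'.
Qed.

Lemma orthXL m l : (l <= m)%N -> bf (Xm R p l) (F2 m.+1) = 0.
Proof.
apply: (spanL hbf hF1) => l' hl'; apply: horth.
by rewrite neq_ltn ltnS hl'.
Qed.

Lemma diag_unit k : bf (F1 k) (F2 k) \in unitmx.
Proof.
rewrite unitmxE unitfE; apply/negP => /det0P [v nz hv].
pose Z : 'M[C]_p := \matrix_(i, j) v 0 j.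
have hZ : Z *m bf (F1 k) (F2 k) = 0.
  apply/matrixP => i j; have := congr1 (fun M : 'rV[C]_p => M 0 j) hv.
  by rewrite !mxE => e; rewrite -[RHS]e; apply: eq_bigr => r _; rewrite /Z mxE.
pose A := cst Z *m F1 k.
have hA : A = 0.
  apply: (nondegL hbf qd (n := k)); first by apply: deg_le_cstM; apply: monic_deg.
  apply: (spanR hbf hF2) => l hl; rewrite gfMl //.
  have [->|ne] := eqVneq l k; first by [].
  by rewrite horth ?mulmx0 // eq_sym.
have : coefm k A = Z by rewrite coefm_cstM monic_coef // mulmx1.
rewrite hA => Z0; apply: (negP nz); apply/eqP/matrixP => i j.
have := congr1 (fun M : 'M[C]_p => M j j) Z0; rewrite !mxE coef0 => e.
by rewrite (ord1 i) -e.
Qed.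

End Abs.

Section Main.
Variable R : realType.
Local Notation C := (R[i]).
Variable p : nat.
Local Notation PM := 'M[{poly C}]_p.
Variables (q : nat) (xs : 'I_q -> R) (kappa : 'I_q -> nat).
Variable beta : forall j : 'I_q, 'I_(kappa j) -> functional_mx R p.
Arguments beta : clear implicits.
Hypothesis hbeta : forall j m, is_functional_mx (beta j m).
Local Notation Nb := (Nb kappa).
Local Notation Np := (\sum_(a < Nb) p)%N.

Lemma pairR_D (P P' : PM) b : is_functional_mx b -> pairR (P + P') b = pairR P b + pairR P' b.
Proof. by move=> hb; have := pairR_cstM 1 P P' hb; rewrite cst1 !mul1mx. Qed.
Lemma pairR_0 b : is_functional_mx b -> pairR (0 : PM) b = 0.
Proof. by move=> hb; apply/matrixP => i l; rewrite !mxE big1 // => k _; rewrite mxE (lf0 (hb _ _)). Qed.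
Lemma pairR_cst A (P : PM) b : is_functional_mx b -> pairR (cst A *m P) b = A *m pairR P b.
Proof. by move=> hb; rewrite -[cst A *m P]addr0 pairR_cstM // pairR_0 // addr0. Qed.
Lemma pairR_sum (I : finType) (F : I -> PM) b : is_functional_mx b ->
  pairR (\sum_i F i) b = \sum_i pairR (F i) b.
Proof. by move=> hb; apply: (big_morph _ (fun P P' => pairR_D P P' hb) (pairR_0 hb)). Qed.
Lemma jetblk_cst A (P : PM) (a : 'I_Nb) : jetblk xs a (cst A *m P) = A *m jetblk xs a P.
Proof. by apply: map_mx_cstM => //; apply: lin_jb. Qed.
Lemma jetblk_D (P P' : PM) (a : 'I_Nb) : jetblk xs a (P + P') = jetblk xs a P + jetblk xs a P'.
Proof. by have := jetblk_cstM xs 1 P P' a; rewrite cst1 !mul1mx. Qed.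
Lemma jetblk_sum (I : finType) (F : I -> PM) (a : 'I_Nb) : jetblk xs a (\sum_i F i) = \sum_i jetblk xs a (F i).
Proof. by apply/matrixP => i j; rewrite !mxE !summxE (lf_sum (lin_jb xs a)); apply: eq_bigr => r _; rewrite mxE. Qed.
Lemma jetblk_tr (P : PM) (a : 'I_Nb) : jetblk xs a P^T = (jetblk xs a P)^T.
Proof. by rewrite /jetblk map_trmx. Qed.

Lemma cst_mxrow m (X : 'I_Nb -> 'M[C]_(m, p)) : cst (\mxrow_a X a) = \mxrow_a cst (X a).
Proof. by apply/matrixP => i j; rewrite !mxE. Qed.
Lemma cst_mxcol_mul (Z : 'M[C]_(p, Np)) (Y : 'I_Nb -> PM) :
  cst Z *m \mxcol_a Y a = \sum_a cst (submxrow Z a) *m Y a.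
Proof. by rewrite -{1}(submxrowK Z) cst_mxrow mul_mxrow_mxcol. Qed.

Variable u : kernel_mx R p.
Hypothesis hu : is_kernel_mx u.
Variables P1 P2 : nat -> PM.
Hypothesis bio : biorthogonal_families u P1 P2.
Hypothesis qdu : quasidefinite u.

Local Notation bu := (bform u).
Local Notation Hi k := (invmx (Hnorm u P1 P2 k)).
Local Notation K := (CDkernel u P1 P2).

Lemma hP1m k : monic_mxpoly k (P1 k). Proof. by case: bio. Qed.
Lemma hP2m k : monic_mxpoly k (P2 k). Proof. by case: bio => _ []. Qed.
Lemma horth n m : n != m -> bu (P1 n) (P2 m) = 0. Proof. by case: bio => _ [] _; apply. Qed.
Lemma H_unit k : Hnorm u P1 P2 k \in unitmx.
Proof. exact: (diag_unit (gf_bform hu) qdu hP1m hP2m horth). Qed.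

Lemma K_form n : K n = \sum_(k < n.+1)
  map_mx (@polyY R) (P2 k)^T *m map_mx (@Defs.polyX R) (cst (Hi k) *m P1 k).
Proof.
apply: eq_bigr => k _; rewrite map_trmx -mulmxA; congr (_ *m _).
apply/esym/matrixP => i j; rewrite !mxE /Defs.polyX rmorph_sum; apply: eq_bigr => r _.
by rewrite !mxE rmorphM.
Qed.

Lemma J01K n (a : 'I_Nb) : J01blk xs (K n) a = \sum_(k < n.+1) cst ((jetblk xs a (P2 k))^T *m Hi k) *m P1 k.
Proof.
rewrite K_form J01blk_sum; apply: eq_bigr => k _.
by rewrite J01blk_prod jetblk_tr cstM mulmxA.
Qed.

Lemma pR2K n b : is_functional_mx b ->
  pairR2 (K n) b = \sum_(k < n.+1) (P2 k)^T *m cst (Hi k *m pairR (P1 k) b).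
Proof.
move=> hb; rewrite K_form pairR2_sum //; apply: eq_bigr => k _.
by rewrite pairR2_prod // pairR_cst.
Qed.

Lemma deg_J01K n (a : 'I_Nb) : deg_le n.+1 (J01blk xs (K n) a).
Proof.
rewrite J01K; apply: deg_le_sum => k; apply: deg_le_cstM.
by apply: (deg_le_mono _ (monic_deg (hP1m k))); rewrite ltn_ord.
Qed.

Lemma deg_pR2K n b : is_functional_mx b -> deg_le n.+1 (pairR2 (K n) b).
Proof.
move=> hb; rewrite pR2K //; apply: deg_le_sum => k; apply: deg_le_Mcst; apply: deg_le_tr.
by apply: (deg_le_mono _ (monic_deg (hP2m k))); rewrite ltn_ord.
Qed.

Lemma bu_J01blk n (a : 'I_Nb) l : bu (J01blk xs (K n) a) (P2 l) =
  if (l <= n)%N then (jetblk xs a (P2 l))^T else 0.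
Proof.
rewrite J01K (gf_suml (gf_bform hu)).
rewrite (eq_bigr _ (fun k _ => gfMl (gf_bform hu) _ _ _)).
case: ifP => hl.
  have hl' : (l < n.+1)%N by [].
  rewrite (bigD1 (Ordinal hl')) //= big1 ?addr0.
    by rewrite mulmxKV //; apply: H_unit.
  move=> k hk; rewrite horth ?mulmx0 //.
rewrite big1 // => k _; rewrite horth ?mulmx0 //.
by apply: contraFN hl => /eqP <-; rewrite -ltnS.
Qed.


Lemma bu_ZJ01 n (Z : 'M[C]_(p, Np)) l : bu (cst Z *m J01 xs kappa (K n)) (P2 l) =
  if (l <= n)%N then Z *m (jet xs kappa (P2 l))^T else 0.
Proof.
rewrite /J01 cst_mxcol_mul (gf_suml (gf_bform hu)).
rewrite (eq_bigr _ (fun a _ => gfMl (gf_bform hu) _ _ _)).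
under eq_bigr do rewrite bu_J01blk.
case: ifP => hl; last by rewrite big1 // => a _; rewrite mulmx0.
by rewrite jetE tr_mxrow -mul_mxrow_mxcol submxrowK.
Qed.

Local Notation Mblk n := (\mxblock_(a < Nb, b < Nb) pairR (J01blk xs (K n) a) (betaT beta (blk b))).

Lemma ZMmat n m (Z : 'M[C]_(m, Np)) : Z *m Mmat xs beta (K n) = Z + Z *m Mblk n.
Proof. by rewrite /Mmat mulmxDr mulmx1. Qed.

Lemma pRb_ZJ01 n (Z : 'M[C]_(p, Np)) :
  pairRbeta beta (cst Z *m J01 xs kappa (K n)) = Z *m Mblk n.
Proof.
rewrite /pairRbeta /J01 cst_mxcol_mul -[in RHS](submxrowK Z) mul_mxrow_mxblock.
apply: eq_mxrow => b; rewrite pairR_sum; last exact: hbeta.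
by apply: eq_bigr => a _; rewrite pairR_cst //; apply: hbeta.
Qed.

Lemma deg_ZJ01 n (Z : 'M[C]_(p, Np)) : deg_le n.+1 (cst Z *m J01 xs kappa (K n)).
Proof.
rewrite /J01 cst_mxcol_mul; apply: deg_le_sum => a; apply: deg_le_cstM; exact: deg_J01K.
Qed.


Lemma pRb0 : pairRbeta beta (0 : PM) = 0.
Proof.
rewrite /pairRbeta -(mxrow0 (q_ := fun _ : 'I_Nb => p)).
by apply: eq_mxrow => a; apply: pairR_0; apply: hbeta.
Qed.

Lemma Np_pos (j : 'I_Np) : (0 < p)%N.
Proof.
case: (posnP p) => // p0.
have e : (\sum_(a < Nb) p = 0)%N by rewrite p0 big1_eq.
have := ltn_ord j; move: (nat_of_ord j) => jj.
by rewrite e.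
Qed.

Variables hP1 hP2 : nat -> PM.
Hypothesis bioh : biorthogonal_families (uhat xs beta u) hP1 hP2.
Hypothesis qdh : quasidefinite (uhat xs beta u).
Local Notation bh := (bform (uhat xs beta u)).

Lemma ghu : gf bh.
Proof. exact: gf_uhat. Qed.
Lemma bh_split P Q : bh P Q = bu P Q + pairRbeta beta P *m (jet xs kappa Q)^T.
Proof. by rewrite bform_uhat bform_vpert. Qed.

Lemma M_unit n : Mmat xs beta (K n) \in unitmx.
Proof.
rewrite unitmxE unitfE; apply/negP => /det0P [v nz hv].
pose Rm : 'M[C]_(p, Np) := \matrix_(i, j) v 0 j.
have hR : Rm *m Mmat xs beta (K n) = 0.
  apply/matrixP => i j; have := congr1 (fun M : 'rV[C]_Np => M 0 j) hv.
  by rewrite !mxE => e; rewrite -[RHS]e; apply: eq_bigr => r _; rewrite /Rm mxE.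
pose Q := cst Rm *m J01 xs kappa (K n).
have hQ : Q = 0.
  apply: (nondegL ghu qdh (n := n)); first exact: deg_ZJ01.
  apply: (spanR ghu hP2m) => l hl.
  by rewrite bh_split bu_ZJ01 hl pRb_ZJ01 -mulmxDl -ZMmat hR mul0mx.
have := pRb_ZJ01 n Rm; rewrite -/Q hQ pRb0 => h0.
have R0 : Rm = 0 by move: hR; rewrite ZMmat -h0 addr0.
apply: (negP nz); apply/eqP/matrixP => i j.
have := congr1 (fun M : 'M[C]_(p, Np) => M (Ordinal (Np_pos j)) j) R0.
by rewrite !mxE (ord1 i).
Qed.


Lemma hhP1m k : monic_mxpoly k (hP1 k). Proof. by case: bioh. Qed.
Lemma hhP2m k : monic_mxpoly k (hP2 k). Proof. by case: bioh => _ []. Qed.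
Lemma hhorth n m : n != m -> bh (hP1 n) (hP2 m) = 0. Proof. by case: bioh => _ [] _; apply. Qed.

Local Notation M n := (Mmat xs beta (K n)).

Lemma hP1_form n : hP1 n.+1 = P1 n.+1 -
  cst (pairRbeta beta (P1 n.+1) *m invmx (M n)) *m J01 xs kappa (K n).
Proof.
set Z := pairRbeta beta (P1 n.+1) *m invmx (M n).
have hZ : Z *m M n = pairRbeta beta (P1 n.+1) by rewrite mulmxKV //; apply: M_unit.
apply/eqP; rewrite eq_sym -subr_eq0; apply/eqP.
apply: (nondegL ghu qdh (n := n)).
  rewrite addrAC; apply: deg_le_sub; last exact: deg_ZJ01.
  exact: monic_sub (hP1m _) (hhP1m _).
move=> l hl; rewrite (gfBl ghu).
rewrite (orthXR ghu hhP2m hhorth hl) subr0.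
apply: (spanR ghu hP2m) hl => l' hl'.
rewrite (gfBl ghu) !bh_split horth; last by rewrite neq_ltn ltnS hl' orbT.
by rewrite add0r bu_ZJ01 hl' pRb_ZJ01 -mulmxDl -ZMmat hZ subrr.
Qed.


Lemma hH_form n : Hnorm (uhat xs beta u) hP1 hP2 n.+1 = Hnorm u P1 P2 n.+1 +
  pairRbeta beta (P1 n.+1) *m invmx (M n) *m (jet xs kappa (P2 n.+1))^T.
Proof.
rewrite /Hnorm.
have -> : hP2 n.+1 = P2 n.+1 + (hP2 n.+1 - P2 n.+1) by rewrite addrC subrK.
rewrite (gfDr ghu).
have -> : bh (hP1 n.+1) (hP2 n.+1 - P2 n.+1) = 0.
  rewrite (expand (monic_sub (hhP2m _) (hP2m _))) (gf_sumr ghu) big1 // => k _.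
  by rewrite (gfMr ghu) (orthXR ghu hhP2m hhorth) ?mul0mx // -ltnS.
rewrite addr0 hP1_form.
set Z := pairRbeta beta (P1 n.+1) *m invmx (M n).
have hZ : pairRbeta beta (P1 n.+1) = Z + Z *m Mblk n.
  by rewrite -ZMmat /Z mulmxKV //; apply: M_unit.
rewrite (gfBl ghu) !bh_split bu_ZJ01 ltnn pRb_ZJ01 hZ add0r mulmxDl.
by rewrite addrA addrK.
Qed.


Local Notation Y n a := ((pairR2 (K n) (betaT beta (blk a)))^T).

Lemma Y_form n (a : 'I_Nb) : Y n a =
  \sum_(k < n.+1) cst ((Hi k *m pairR (P1 k) (betaT beta (blk a)))^T) *m P2 k.
Proof.
rewrite pR2K; last exact: hbeta.
rewrite raddf_sum /=; apply: eq_bigr => k _.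
by rewrite trmx_mul trmxK cst_tr.
Qed.

Lemma bu_Y n k (a : 'I_Nb) : (k <= n)%N -> bu (P1 k) (Y n a) = pairR (P1 k) (betaT beta (blk a)).
Proof.
move=> hk; rewrite Y_form (gf_sumr (gf_bform hu)).
rewrite (eq_bigr _ (fun k' _ => gfMr (gf_bform hu) _ _ _)).
have hk' : (k < n.+1)%N by [].
rewrite (bigD1 (Ordinal hk')) //= big1 ?addr0.
  by rewrite trmxK mulKVmx //; apply: H_unit.
move=> k' hne; rewrite horth ?mul0mx //.
by apply: contra hne => /eqP e; apply/eqP/val_inj.
Qed.

Lemma jetblk_Y n (a b : 'I_Nb) :
  jetblk xs b (Y n a) = (pairR (J01blk xs (K n) b) (betaT beta (blk a)))^T.
Proof.
rewrite Y_form jetblk_sum J01K pairR_sum; last exact: hbeta.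
rewrite raddf_sum /=; apply: eq_bigr => k _.
rewrite jetblk_cst pairR_cst; last exact: hbeta.
by rewrite !trmx_mul trmxK mulmxA.
Qed.

Lemma deg_Y n (a : 'I_Nb) : deg_le n.+1 (Y n a).
Proof. by apply: deg_le_tr; apply: deg_pR2K; apply: hbeta. Qed.


Lemma MW n (W : 'M[C]_(Np, p)) : M n *m W = W + Mblk n *m W.
Proof. by rewrite /Mmat mulmxDl mul1mx. Qed.

Lemma jet_sumY n (Wt : 'M[C]_(p, Np)) :
  (jet xs kappa (\sum_a cst (submxrow Wt a) *m Y n a))^T = Mblk n *m Wt^T.
Proof.
have -> : jet xs kappa (\sum_a cst (submxrow Wt a) *m Y n a) =
    \sum_a submxrow Wt a *m jet xs kappa (Y n a).
  rewrite jetE; under [RHS]eq_bigr do rewrite jetE mul_mxrow.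
  rewrite -mxrow_sum; apply: eq_mxrow => b.
  by rewrite jetblk_sum; apply: eq_bigr => a _; rewrite jetblk_cst.
have e2 : \sum_a submxrow Wt a *m jet xs kappa (Y n a) = Wt *m (Mblk n)^T.
  rewrite tr_mxblock -[Wt in RHS]submxrowK mul_mxrow_mxblock.
  apply/mxrowP => b; rewrite mxrowK submxrow_sum; apply: eq_bigr => a _.
  by rewrite -mul_submxrow jetE mxrowK jetblk_Y.
by rewrite e2 trmx_mul trmxK.
Qed.


Lemma hP2_form n : hP2 n.+1 = P2 n.+1 -
  cst (invmx (M n) *m (jet xs kappa (P2 n.+1))^T)^T *m (pairR2beta beta (K n))^T.
Proof.
set W := invmx (M n) *m (jet xs kappa (P2 n.+1))^T.
have hW : M n *m W = (jet xs kappa (P2 n.+1))^T by rewrite mulKVmx //; apply: M_unit.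
have eS : cst W^T *m (pairR2beta beta (K n))^T = \sum_a cst (submxrow W^T a) *m Y n a.
  by rewrite /pairR2beta tr_mxrow cst_mxcol_mul.
rewrite eS; apply/eqP; rewrite eq_sym -subr_eq0; apply/eqP.
apply: (nondegR ghu qdh (n := n)).
  rewrite addrAC; apply: deg_le_sub; first exact: monic_sub (hP2m _) (hhP2m _).
  by apply: deg_le_sum => a; apply: deg_le_cstM; exact: deg_Y.
move=> l hl; rewrite (gfBr ghu) (orthXL ghu hhP1m hhorth hl) subr0.
apply: (spanL ghu hP1m) hl => k hk.
rewrite (gfBr ghu) !bh_split horth; last by rewrite neq_ltn ltnS hk.
have e3 : bu (P1 k) (\sum_a cst (submxrow W^T a) *m Y n a) = pairRbeta beta (P1 k) *m W.
  rewrite -[in RHS](trmxK W) -[in RHS](submxrowK W^T) tr_mxrow /pairRbeta mul_mxrow_mxcol.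
  rewrite (gf_sumr (gf_bform hu)); apply: eq_bigr => a _.
  by rewrite (gfMr (gf_bform hu)) bu_Y.
rewrite add0r e3 jet_sumY trmxK -mulmxDr -MW hW subrr //.
Qed.

Lemma hP2T_form n : (hP2 n.+1)^T = (P2 n.+1)^T -
  pairR2beta beta (K n) *m map_mx polyC (invmx (M n) *m (jet xs kappa (P2 n.+1))^T).
Proof. by rewrite hP2_form linearB /= trmx_mul trmxK cst_tr trmxK. Qed.

End Main.

Unset Implicit Arguments.

Theorem mainTheorem5 (R : realType) (p : nat) (q : nat) (xs : 'I_q -> R)
  (kappa : 'I_q -> nat) (beta : forall j : 'I_q, 'I_(kappa j) -> functional_mx R p)
  (u : kernel_mx R p)
  (P1 P2 hP1 hP2 : nat -> 'M[{poly R[i]}]_p) :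
  injective xs ->
  (forall j, (0 < kappa j)%N) ->
  (forall j m, is_functional_mx (beta j m)) ->
  is_kernel_mx u ->
  quasidefinite u ->
  quasidefinite (uhat xs beta u) ->
  beta_lin_indep beta ->
  perpR_trivial u (KerR beta) \/ perpL_trivial u (in_ideal xs kappa) ->
  biorthogonal_families u P1 P2 ->
  biorthogonal_families (uhat xs beta u) hP1 hP2 ->
  let K := CDkernel u P1 P2 in
  let H := Hnorm u P1 P2 in
  let hH := Hnorm (uhat xs beta u) hP1 hP2 in
  let M := fun n => Mmat xs beta (K n) in
  (forall n, M n \in unitmx) /\
  (forall n,
     [/\ hP1 n.+1 = P1 n.+1 - map_mx polyC (pairRbeta beta (P1 n.+1) *m invmx (M n))
                                *m J01 xs kappa (K n),
         (hP2 n.+1)^T = (P2 n.+1)^T - pairR2beta beta (K n)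
                                *m map_mx polyC (invmx (M n) *m (jet xs kappa (P2 n.+1))^T)
       & hH n.+1 = H n.+1 + pairRbeta beta (P1 n.+1) *m invmx (M n)
                                *m (jet xs kappa (P2 n.+1))^T]).
Proof.
Proof.
move=> _ _ hbeta hu qdu qdh _ _ bio bioh K H hH M.
split; first by move=> n; exact: (M_unit hbeta hu bio qdu qdh n).
move=> n; split.
- exact: (hP1_form hbeta hu bio qdu bioh qdh n).
- exact: (hP2T_form hbeta hu bio qdu bioh qdh n).
- exact: (hH_form hbeta hu bio qdu bioh qdh n).
Qed.
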